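(* Let $f:A\to B$ be a ring homomorphism and let $\mathfrak b$ be an ideal of $B$. Let $A\bowtie^f\mathfrak b:=\{(a,f(a)+b): a\in A,\ b\in\mathfrak b\}$, a subring of $A\times B$. Assume that $f^{-1}(\mathfrak b)$ is a regular ideal of $A$ and $\mathfrak b$ is a regular ideal of $B$. Then the following are equivalent: (i) $A\bowtie^f\mathfrak b$ is a Prüfer ring; (ii) $A$ and $B$ are Prüfer rings and $\mathfrak b=B$.
   Context: All rings are commutative with identity. An element of a ring is regular if it is not a zerodivisor; an ideal is regular if it contains a regular element. A ring $R$ is a Prüfer ring if every regular finitely generated ideal of $R$ is invertible. *)

(* Defs.v *)
From HB Require Import structures.
From mathcomp Require Import all_boot all_order all_algebra.
From mathcomp Require Import ring.
Set Implicit Arguments. Unset Strict Implicit. Unset Printing Implicit Defensive.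
Import Order.TTheory GRing.Theory Num.Theory.
Local Open Scope ring_scope.

Definition regular (R : comPzRingType) (x : R) : Prop :=
  forall y : R, x * y = 0 -> y = 0.

Record ideal (R : comPzRingType) := Ideal {
  idmem :> pred R;
  ideal0 : 0 \in idmem;
  idealB : forall x y, x \in idmem -> y \in idmem -> x - y \in idmem;
  idealM : forall r x, x \in idmem -> r * x \in idmem }.

Definition regular_ideal (R : comPzRingType) (I : R -> Prop) : Prop :=
  exists x, I x /\ regular x.

Definition fg_ideal (R : comPzRingType) (n : nat) (g : 'I_n -> R) : R -> Prop :=
  fun x => exists c : 'I_n -> R, x = \sum_(i < n) c i * g i.

(* Invertibility of an ideal I of R: I * J = R for some fractional ideal J,
   i.e. 1 = sum_i a_i * y_i with a_i in I and y_i in the total quotient ring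
   T(R) with y_i * I contained in R.  Writing the finitely many y_i over a
   common regular denominator s (y_i = u_i / s) this unfolds to: *)
Definition invertible (R : comPzRingType) (I : R -> Prop) : Prop :=
  exists (s : R) (m : nat) (a u : 'I_m -> R),
    [/\ regular s,
        forall i, I (a i),
        forall i x, I x -> exists r, u i * x = s * r
      & \sum_(i < m) a i * u i = s].

Definition prufer (R : comPzRingType) : Prop :=
  forall (n : nat) (g : 'I_n -> R),
    regular_ideal (fg_ideal g) -> invertible (fg_ideal g).

Section Amalgamation.
Variables (A B : comPzRingType) (f : {rmorphism A -> B}) (I : ideal B).

Definition amalg_set (x : A * B) : Prop :=
  exists a : A, exists b : B, b \in idmem I /\ x = (a, f a + b).

Definition amalg_pred : pred (A * B) := [pred x | x.2 - f x.1 \in idmem I].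

Lemma amalg_predE x : amalg_set x <-> x \in amalg_pred.
Proof.
case: x => x1 x2; rewrite /amalg_set inE /=; split.
  case=> a [b [Ib [-> ->]]] /=.
  by have -> : f a + b - f a = b by ring.
move=> H; exists x1, (x2 - f x1); split => //.
by have -> : f x1 + (x2 - f x1) = x2 by ring.
Qed.

Fact amalg_subring_closed : subring_closed amalg_pred.
Proof.
have IN x : x \in idmem I -> - x \in idmem I.
  by move=> Hx; rewrite -sub0r; apply: idealB => //; exact: ideal0.
have ID x y : x \in idmem I -> y \in idmem I -> x + y \in idmem I.
  by move=> Hx Hy; rewrite -[y]opprK; apply: idealB => //; exact: IN.
split.
- by rewrite inE /= rmorph1 subrr ideal0.
- move=> x y; rewrite !inE /= => Hx Hy.
  have -> : x.2 - y.2 - f (x.1 - y.1) = (x.2 - f x.1) - (y.2 - f y.1).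
    by rewrite rmorphB; ring.
  exact: idealB.
- move=> x y; rewrite !inE /= => Hx Hy.
  have -> : x.2 * y.2 - f (x.1 * y.1) = y.2 * (x.2 - f x.1) + f x.1 * (y.2 - f y.1).
    by rewrite rmorphM; ring.
  by apply: ID; apply: idealM.
Qed.

Record amalg := Amalg { amval :> A * B; _ : amval \in amalg_pred }.
HB.instance Definition _ := [isSub for amval].
HB.instance Definition _ := [Choice of amalg by <:].
HB.instance Definition _ := GRing.SubChoice_isSubComPzRing.Build (A * B)%type
  amalg_pred amalg amalg_subring_closed.
End Amalgamation.

(* Main.v *)
Require Import Defs.
From HB Require Import structures.
From mathcomp Require Import all_boot all_order all_algebra.
From mathcomp Require Import ring.
Import GRing.Theory.
Local Open Scope ring_scope.

Section Proof.
Variables (A B : comPzRingType) (f : {rmorphism A -> B}) (I : ideal B).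
Local Notation R := (amalg f I).

Lemma prodE (x y : (A * B)%type) : x.1 = y.1 -> x.2 = y.2 -> x = y.
Proof. by case: x => ? ?; case: y => ? ? /= -> ->. Qed.

Lemma sum1 n (F : 'I_n -> R) : (amval (\sum_i F i)).1 = \sum_i (amval (F i)).1.
Proof.
have := rmorph_sum (val : R -> (A * B)%type) (index_enum 'I_n) xpredT F.
move=> /= ->; exact: (rmorph_sum fst).
Qed.

Lemma sum2 n (F : 'I_n -> R) : (amval (\sum_i F i)).2 = \sum_i (amval (F i)).2.
Proof.
have := rmorph_sum (val : R -> (A * B)%type) (index_enum 'I_n) xpredT F.
move=> /= ->; exact: (rmorph_sum snd).
Qed.

Lemma valM (x y : R) : amval (x * y) = amval x * amval y.
Proof. by []. Qed.

Lemma reg_pair (x : R) : regular (val x).1 -> regular (val x).2 -> regular x.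
Proof.
move=> r1 r2 y hy; apply: val_inj; have := congr1 val hy.
rewrite rmorphM /= => e; apply: prodE => /=.
  by apply: r1; have := congr1 fst e.
by apply: r2; have := congr1 snd e.
Qed.

Lemma fg_fst n (g : 'I_n -> R) x : fg_ideal g x ->
  fg_ideal (fun i => (val (g i)).1) (val x).1.
Proof.
case=> c ->; exists (fun i => (val (c i)).1).
rewrite !rmorph_sum /=; by apply: eq_bigr.
Qed.

Lemma fg_snd n (g : 'I_n -> R) x : fg_ideal g x ->
  fg_ideal (fun i => (val (g i)).2) (val x).2.
Proof.
case=> c ->; exists (fun i => (val (c i)).2).
rewrite !rmorph_sum /=; by apply: eq_bigr.
Qed.

Hypothesis hI : forall b : B, b \in idmem I.

Lemma inP (p : (A * B)%type) : p \in amalg_pred f I.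
Proof. by rewrite inE hI. Qed.

Definition mk p : R := Amalg (inP p).

Lemma reg_fst (x : R) : regular x -> regular (val x).1.
Proof.
move=> rx y hy.
have : x * mk (y, 0) = 0.
  apply: val_inj; rewrite rmorphM /=; apply: prodE => /=; first by [].
  by rewrite mulr0.
by move/rx/(congr1 (fun z : R => (val z).1)).
Qed.

Lemma reg_snd (x : R) : regular x -> regular (val x).2.
Proof.
move=> rx y hy.
have : x * mk (0, y) = 0.
  apply: val_inj; rewrite rmorphM /=; apply: prodE => /=; last by [].
  by rewrite mulr0.
by move/rx/(congr1 (fun z : R => (val z).2)).
Qed.

Lemma prufer_A : prufer R -> prufer A.
Proof.
move=> hP n g [x [[c hx] rx]].
case: n g c hx => [|n] g c hx.
  exists 0, 0%N, (fun _ => 0), (fun _ => 0); split.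
  - by move=> y _; apply: rx; rewrite hx big_ord0 mul0r.
  - by case.
  - by case.
  - by rewrite big_ord0.
pose G i := mk (g i, 1).
have hreg : regular_ideal (fg_ideal G).
  exists (mk (x, 1)); split.
    exists (fun i => mk (c i, if i == ord0 then 1 else 0)).
    apply: val_inj; rewrite rmorph_sum; apply: prodE.
      by rewrite /= hx rmorph_sum.
    rewrite /= rmorph_sum /= big_ord_recl /= mulr1 big1 ?addr0 // => i _.
    by rewrite mul0r.
  by apply: reg_pair => //= y; rewrite mul1r.
have [s [m [a [u [rs ha hu hsum]]]]] := hP _ _ hreg.
exists (val s).1, m, (fun k => (val (a k)).1), (fun k => (val (u k)).1); split.
- exact: reg_fst.
- by move=> k; exact: (@fg_fst _ _ _ (ha k)).
- move=> k y [d ->].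
  have hY : fg_ideal G (\sum_i mk (d i, 0) * G i) by exists (fun i => mk (d i, 0)).
  have [r hr] := hu k _ hY.
  exists (val r).1; have := congr1 (fun z : R => (val z).1) hr.
  rewrite /= => <-.
  by congr (_ * _); rewrite sum1.
- have := congr1 (fun z : R => (val z).1) hsum.
  by rewrite /= sum1.
Qed.

Lemma prufer_B : prufer R -> prufer B.
Proof.
move=> hP n g [x [[c hx] rx]].
case: n g c hx => [|n] g c hx.
  exists 0, 0%N, (fun _ => 0), (fun _ => 0); split.
  - by move=> y _; apply: rx; rewrite hx big_ord0 mul0r.
  - by case.
  - by case.
  - by rewrite big_ord0.
pose G i := mk (1, g i).
have hreg : regular_ideal (fg_ideal G).
  exists (mk (1, x)); split.
    exists (fun i => mk (if i == ord0 then 1 else 0, c i)).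
    apply: val_inj; rewrite rmorph_sum; apply: prodE; last first.
      by rewrite /= hx rmorph_sum.
    rewrite /= rmorph_sum /= big_ord_recl /= mulr1 big1 ?addr0 // => i _.
    by rewrite mul0r.
  by apply: reg_pair => //= y; rewrite mul1r.
have [s [m [a [u [rs ha hu hsum]]]]] := hP _ _ hreg.
exists (val s).2, m, (fun k => (val (a k)).2), (fun k => (val (u k)).2); split.
- exact: reg_snd.
- by move=> k; exact: (@fg_snd _ _ _ (ha k)).
- move=> k y [d ->].
  have hY : fg_ideal G (\sum_i mk (0, d i) * G i) by exists (fun i => mk (0, d i)).
  have [r hr] := hu k _ hY.
  exists (val r).2; have := congr1 (fun z : R => (val z).2) hr.
  rewrite /= => <-.
  by congr (_ * _); rewrite sum2.
- have := congr1 (fun z : R => (val z).2) hsum.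
  by rewrite /= sum2.
Qed.

Lemma prufer_prod : prufer A -> prufer B -> prufer R.
Proof.
move=> pA pB n g [x [hx rx]].
have [sA [mA [aA [uA [rsA haA huA hsA]]]]] :=
  pA _ _ (ex_intro _ _ (conj (@fg_fst _ _ _ hx) (reg_fst x rx))).
have [sB [mB [aB [uB [rsB haB huB hsB]]]]] :=
  pB _ _ (ex_intro _ _ (conj (@fg_snd _ _ _ hx) (reg_snd x rx))).
pose a k := match split k with inl i => mk (aA i, 0) | inr j => mk (0, aB j) end.
pose u k := match split k with inl i => mk (uA i, 0) | inr j => mk (0, uB j) end.
have sl i : split (lshift mB i) = inl i.
  by rewrite -[lshift _ _]/(unsplit (inl i)) unsplitK.
have sr j : split (rshift mA j) = inr j.
  by rewrite -[rshift _ _]/(unsplit (inr j)) unsplitK.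
exists (mk (sA, sB)), (mA + mB)%N, a, u; split.
- exact: reg_pair.
- move=> k; rewrite /a; case: (split k) => [i|j].
    have [c hc] := haA i.
    exists (fun l => mk (c l, 0)); apply: val_inj; apply: prodE.
      by rewrite /= hc sum1.
    by rewrite /= sum2 big1 // => l _; rewrite valM /= mul0r.
  have [c hc] := haB j.
  exists (fun l => mk (0, c l)); apply: val_inj; apply: prodE.
    by rewrite /= sum1 big1 // => l _; rewrite valM /= mul0r.
  by rewrite /= hc sum2.
- move=> k y hy; rewrite /u; case: (split k) => [i|j].
    have [r hr] := huA i _ (@fg_fst _ _ _ hy).
    exists (mk (r, 0)); apply: val_inj; apply: prodE => /=; first exact: hr.
    by rewrite !mulr0 mul0r.
  have [r hr] := huB j _ (@fg_snd _ _ _ hy).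
  exists (mk (0, r)); apply: val_inj; apply: prodE => /=; last exact: hr.
  by rewrite !mulr0 mul0r.
- rewrite big_split_ord /a /u.
  under eq_bigr do rewrite sl.
  under [X in _ + X = _]eq_bigr do rewrite sr.
  apply: val_inj; apply: prodE.
    rewrite /= sum1 sum1 [X in _ + X]big1 ?addr0; last first.
      by move=> j _; rewrite valM /= mul0r.
    by rewrite -hsA; apply: eq_bigr => i _; rewrite valM.
  rewrite /= sum2 sum2 [X in X + _]big1 ?add0r; last first.
    by move=> j _; rewrite valM /= mul0r.
  by rewrite -hsB; apply: eq_bigr => i _; rewrite valM.
Qed.

End Proof.

Lemma all_in (A B : comPzRingType) (f : {rmorphism A -> B}) (I : ideal B) :
  regular_ideal (fun a : A => f a \in idmem I) ->
  regular_ideal (fun b : B => b \in idmem I) ->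
  prufer (amalg f I) -> forall b : B, b \in idmem I.
Proof.
move=> [a0 [fa0 ra0]] [b0 [Ib0 rb0]] hP.
have pd : (a0, b0) \in amalg_pred f I by rewrite inE /= idealB.
have pp : (a0, 0) \in amalg_pred f I by rewrite inE /= idealB // ideal0.
pose d : amalg f I := Amalg pd.
pose p : amalg f I := Amalg pp.
pose g (i : 'I_2) := if val i == 0%N then d else p.
have hd : fg_ideal g d.
  exists (fun i => if val i == 0%N then 1 else 0).
  by rewrite !big_ord_recl big_ord0 /= mul1r mul0r !addr0.
have rd : regular d by apply: reg_pair.
have [s [m [a [u [rs ha hu hsum]]]]] := hP 2%N g (ex_intro _ d (conj hd rd)).
have pdpp : p * d = p * p.
  by apply: val_inj; apply: prodE; rewrite /= ?mul0r.
have key i : exists r, p * a i * u i = d * (s * r).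
  case: (ha i) => c ->; rewrite !big_ord_recl big_ord0 /=.
  set c0 := c ord0; set c1 := c _.
  have hz : fg_ideal g ((c0 + c1) * p).
    exists (fun i => if val i == 0%N then 0 else c0 + c1).
    by rewrite !big_ord_recl big_ord0 /= mul0r add0r addr0.
  have [r hr] := hu i _ hz.
  exists r; rewrite -hr.
  rewrite (_ : p * (c0 * d + (c1 * p + 0)) = c0 * (p * d) + c1 * (p * p)); last by ring.
  rewrite (_ : d * (u i * ((c0 + c1) * p)) = (c0 + c1) * (p * d) * u i); last by ring.
  rewrite pdpp; ring.
have [r hr] := fin_all_exists key.
have ht : s * (p - d * \sum_i r i) = 0.
  have E : p * s = s * (d * \sum_i r i).
    rewrite -{1}hsum mulr_sumr (eq_bigr (fun i => d * (s * r i))); last first.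
      by move=> i _; rewrite mulrA hr.
    by rewrite -mulr_sumr -mulr_sumr mulrCA.
  by rewrite mulrBr [s * p]mulrC E subrr.
move/rs/eqP: ht; rewrite subr_eq0 => /eqP ht.
set t := \sum_i r i in ht.
have e1 := congr1 (fun z : amalg f I => (amval z).1) ht.
have e2 := congr1 (fun z : amalg f I => (amval z).2) ht.
rewrite /= in e1 e2.
have t1 : (amval t).1 = 1.
  apply/eqP; rewrite -subr_eq0; apply/eqP; apply: ra0.
  by rewrite mulrBr mulr1 -e1 subrr.
have t2 : (amval t).2 = 0 by apply: rb0; rewrite -e2.
have := valP t; rewrite inE t1 t2 rmorph1 sub0r => hm1 b.
have -> : b = (- b) * (-1) by rewrite mulrNN mulr1.
exact: idealM.
Qed.

Theorem theorem3p1 (A B : comPzRingType) (f : {rmorphism A -> B}) (I : ideal B) :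
  regular_ideal (fun a : A => f a \in idmem I) ->
  regular_ideal (fun b : B => b \in idmem I) ->
  (prufer (amalg f I) <-> [/\ prufer A, prufer B & forall b : B, b \in idmem I]).
Proof.
move=> hA hB; split.
  move=> hP; have hI := @all_in A B f I hA hB hP.
  by split => //; [exact: (@prufer_A A B f I hI) | exact: (@prufer_B A B f I hI)].
by case=> pA pB hI; exact: (@prufer_prod A B f I hI).
Qed.
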